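(* Let $\mathcal U$ be an unbalanced critical update family and $\alpha=\alpha(\mathcal U)$. Then there exists $u^*\in S^1$ such that $\min\{\alpha(u^* ),\alpha(-u^* )\}\ge\alpha+1$.
   Context: An update family is a finite collection $\mathcal U$ of finite subsets of $\mathbb Z^2\setminus\{0\}$ acting by $A_{t+1}=A_t\cup\{x:x+X\subset A_t\text{ for some }X\in\mathcal U\}$, closure $[A]=\bigcup_tA_t$. $\mathbb H_u=\{x\in\mathbb Z^2:\langle x,u\rangle<0\}$, $u$ stable if $[\mathbb H_u]=\mathbb H_u$, $\mathcal S$ the stable set. For rational $u$, $\ell_u=\{x:\langle x,u\rangle=0\}$, $\ell_u^\pm$ = origin plus sites of $\ell_u$ right/left of the origin looking in direction $u$; $\alpha^\pm(u)$ = minimal $|Z|$ with $[\mathbb H_u\cup Z]\cap\ell_u^\pm$ infinite; $\alpha(u)=\min\{\alpha^+,\alpha^-\}$ if both finite, else $\infty$ (irrational $u$: $\infty$ if stable, $0$ otherwise). $\alpha(\mathcal U)=\min_C\sup_{u\in C}\alpha(u)$ over open semicircles $C$. Critical: some semicircle has finite intersection with $\mathcal S$ and every open semicircle meets $\mathcal S$. A critical $\mathcal U$ is balanced if some closed semicircle $C$ has $\alpha(u)\le\alpha(\mathcal U)$ for all $u\in C$, and unbalanced otherwise. *)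

(* Defs.v *)
From Stdlib Require Import Reals ZArith List Classical ClassicalEpsilon.
Import ListNotations.
Open Scope R_scope.

Definition site := (Z * Z)%type.
Definition siteset := site -> Prop.
Definition sadd (x y : site) : site := ((fst x + fst y)%Z, (snd x + snd y)%Z).

Definition update_family (U : list (list site)) : Prop :=
  forall X, In X U -> ~ In (0%Z, 0%Z) X.

Definition step (U : list (list site)) (A : siteset) : siteset :=
  fun x => A x \/ exists X, In X U /\ forall y, In y X -> A (sadd x y).

Fixpoint iter_step (U : list (list site)) (A : siteset) (t : nat) : siteset :=
  match t with
  | O => A
  | S t' => step U (iter_step U A t')
  end.

Definition closure (U : list (list site)) (A : siteset) : siteset :=
  fun x => exists t, iter_step U A t x.

Definition set_union (A B : siteset) : siteset := fun x => A x \/ B x.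
Definition set_of_list (l : list site) : siteset := fun x => In x l.
Definition set_finite (A : siteset) : Prop := exists l : list site, forall x, A x -> In x l.
Definition set_infinite (A : siteset) : Prop := ~ set_finite A.

Definition dir := (R * R)%type.
Definition on_circle (u : dir) : Prop := fst u * fst u + snd u * snd u = 1.
Definition dneg (u : dir) : dir := (- fst u, - snd u).
Definition dot (u v : dir) : R := fst u * fst v + snd u * snd v.

Definition ip (x : site) (u : dir) : R := IZR (fst x) * fst u + IZR (snd x) * snd u.

Definition halfplane (u : dir) : siteset := fun x => ip x u < 0.

Definition stable (U : list (list site)) (u : dir) : Prop :=
  forall x, closure U (halfplane u) x <-> halfplane u x.

Definition rational_dir (u : dir) : Prop :=
  exists p q : Z, (p <> 0%Z \/ q <> 0%Z) /\ IZR p * fst u + IZR q * snd u = 0.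

(** l_u, and l_u^+ / l_u^- : origin together with the sites of l_u to the right /
    left of the origin when looking in direction u.  "Right" of direction (u1,u2)
    is the direction (u2,-u1). *)
Definition line (u : dir) : siteset := fun x => ip x u = 0.
Definition right_of (u : dir) : dir := (snd u, - fst u).
Definition line_plus (u : dir) : siteset := fun x => line u x /\ 0 <= ip x (right_of u).
Definition line_minus (u : dir) : siteset := fun x => line u x /\ ip x (right_of u) <= 0.

Inductive enat := Fin (n : nat) | Inf.

Definition ele (a b : enat) : Prop :=
  match a, b with
  | _, Inf => True
  | Inf, Fin _ => False
  | Fin m, Fin n => (m <= n)%nat
  end.

Definition esucc (a : enat) : enat :=
  match a with Fin n => Fin (S n) | Inf => Inf end.

Definition emin (a b : enat) : enat :=
  match a, b with
  | Fin m, Fin n => Fin (Nat.min m n)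
  | Fin m, Inf => Fin m
  | Inf, b => b
  end.

Definition least (P : nat -> Prop) : enat :=
  match excluded_middle_informative (exists n, P n) with
  | left _ => Fin (epsilon (inhabits 0%nat) (fun n => P n /\ forall m, P m -> (n <= m)%nat))
  | right _ => Inf
  end.

Definition alpha_side (U : list (list site)) (L : siteset) (u : dir) : enat :=
  least (fun k => exists Z : list site, NoDup Z /\ length Z = k /\
           set_infinite (fun x => closure U (set_union (halfplane u) (set_of_list Z)) x /\ L x)).

Definition alpha_plus (U : list (list site)) (u : dir) : enat :=
  alpha_side U (line_plus u) u.
Definition alpha_minus (U : list (list site)) (u : dir) : enat :=
  alpha_side U (line_minus u) u.

Definition alpha (U : list (list site)) (u : dir) : enat :=
  if excluded_middle_informative (rational_dir u) then
    match alpha_plus U u, alpha_minus U u with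
    | Fin a, Fin b => Fin (Nat.min a b)
    | _, _ => Inf
    end
  else if excluded_middle_informative (stable U u) then Inf else Fin 0.

Definition open_semicircle (v : dir) (u : dir) : Prop := on_circle u /\ dot u v > 0.
Definition closed_semicircle (v : dir) (u : dir) : Prop := on_circle u /\ dot u v >= 0.

(** alpha(U) = min over open semicircles C of sup_{u in C} alpha(u), written as
    the least k such that some open semicircle C has alpha(u) <= k for all u in C
    (∞ if there is no such k). *)
Definition alpha_fam (U : list (list site)) : enat :=
  least (fun k => exists v, on_circle v /\
           forall u, open_semicircle v u -> ele (alpha U u) (Fin k)).

Definition critical (U : list (list site)) : Prop :=
  (exists v, on_circle v /\
     exists l : list dir, forall u, open_semicircle v u -> stable U u -> In u l) /\
  (forall v, on_circle v -> exists u, open_semicircle v u /\ stable U u).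

Definition balanced (U : list (list site)) : Prop :=
  exists v, on_circle v /\
    forall u, closed_semicircle v u -> ele (alpha U u) (alpha_fam U).

Definition unbalanced (U : list (list site)) : Prop := ~ balanced U.

(* Main.v *)
Require Import Defs.
From Stdlib Require Import Reals ZArith List Classical ClassicalEpsilon Lra Lia Psatz.
Import ListNotations.
Open Scope R_scope.

Lemma ip_sadd x y u : ip (sadd x y) u = ip x u + ip y u.
Proof. destruct x, y; unfold ip, sadd; simpl; rewrite !plus_IZR; ring. Qed.

Lemma abs_lo x : - Rabs x <= x.
Proof. pose proof (Rle_abs (- x)). rewrite Rabs_Ropp in H. lra. Qed.

Lemma closure_incl U (B A : siteset) :
  (forall x, B x -> A x) ->
  (forall x, ~ A x -> forall X, In X U -> exists y, In y X /\ ~ A (sadd x y)) ->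
  forall x, closure U B x -> A x.
Proof.
  intros HBA Hcl x [t Ht]. revert x Ht. induction t as [|t IH]; simpl; intros x Ht.
  - auto.
  - destruct Ht as [Ht|[X [HX Hall]]]; [auto|].
    destruct (classic (A x)) as [h|h]; [exact h|].
    destruct (Hcl x h X HX) as [y [Hy Hn]]. exfalso. apply Hn. apply IH. apply Hall. exact Hy.
Qed.

Lemma ex_min (P : nat -> Prop) n : P n -> exists m, P m /\ forall k, P k -> (m <= k)%nat.
Proof.
  induction n as [n IH] using (well_founded_induction Wf_nat.lt_wf).
  intros Hn. destruct (classic (exists k, P k /\ (k < n)%nat)) as [[k [Hk Hlt]]|Hno].
  - exact (IH k Hlt Hk).
  - exists n. split; auto. intros k Hk. destruct (Nat.le_gt_cases n k); auto. exfalso; eauto.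
Qed.

Lemma least_inf P : ~ (exists n, P n) -> least P = Inf.
Proof. intros H. unfold least. destruct (excluded_middle_informative _); [contradiction|reflexivity]. Qed.

Lemma least_fin P k : least P = Fin k -> P k.
Proof.
  unfold least. destruct (excluded_middle_informative _) as [[n Hn]|h]; [|discriminate].
  intros E. injection E as E. rewrite <- E.
  destruct (ex_min P n Hn) as [m Hm].
  exact (proj1 (epsilon_spec (inhabits 0%nat) (fun n => P n /\ forall m, P m -> (n <= m)%nat) (ex_intro _ m Hm))).
Qed.

Lemma least_zero P : P 0%nat -> least P = Fin 0.
Proof.
  intros H0. unfold least. destruct (excluded_middle_informative _) as [Hex|Hno]; [|exfalso; eauto].
  f_equal.
  destruct (ex_min P 0 H0) as [m Hm].
  pose proof (epsilon_spec (inhabits 0%nat) (fun n => P n /\ forall m, P m -> (n <= m)%nat) (ex_intro _ m Hm)) as [_ Hle].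
  specialize (Hle 0%nat H0). lia.
Qed.

Lemma eps_list (l : list site) (F G : site -> R) :
  exists e, 0 < e /\ forall y, In y l -> 0 < G y -> e * Rabs (F y) < G y.
Proof.
  induction l as [|a l [e [He H]]].
  - exists 1. split; [lra|]. intros y [].
  - destruct (Rlt_dec 0 (G a)) as [Ha|Ha].
    + pose proof (Rabs_pos (F a)) as Hp.
      exists (Rmin e (G a / (Rabs (F a) + 1))). split.
      * apply Rmin_glb_lt; auto. apply Rdiv_lt_0_compat; lra.
      * intros y [<-|Hy] Hy0.
        -- pose proof (Rmin_r e (G a / (Rabs (F a) + 1))) as Hr.
           assert (Hm : 0 < Rmin e (G a / (Rabs (F a) + 1))).
           { apply Rmin_glb_lt; auto. apply Rdiv_lt_0_compat; lra. }
           apply (Rmult_le_compat_r (Rabs (F a)+1)) in Hr; [| lra].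
           replace (G a / (Rabs (F a) + 1) * (Rabs (F a) + 1)) with (G a) in Hr by (field; lra).
           nra.
        -- pose proof (Rmin_l e (G a / (Rabs (F a) + 1))).
           specialize (H y Hy Hy0). pose proof (Rabs_pos (F y)). nra.
    + exists e. split; auto. intros y [<-|Hy] Hy0; [contradiction|auto].
Qed.

Lemma bound_list (l : list site) (f : site -> R) : exists C, forall z, In z l -> f z < C.
Proof.
  induction l as [|a l [C HC]].
  - exists 0; intros z [].
  - exists (Rmax C (f a) + 1). intros z [<-|Hz].
    + pose proof (Rmax_r C (f a)); lra.
    + specialize (HC z Hz). pose proof (Rmax_l C (f a)); lra.
Qed.

Lemma finite_mono (A B : siteset) : set_finite B -> (forall x, A x -> B x) -> set_finite A.
Proof. intros [l Hl] H. exists l. auto. Qed.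

Lemma box_finite (N : Z) :
  set_finite (fun x : site => (-N <= fst x <= N)%Z /\ (-N <= snd x <= N)%Z).
Proof.
  set (zr := map (fun n => (Z.of_nat n - N)%Z) (seq 0 (Z.to_nat (2*N+1)))).
  assert (Hz : forall z, (-N <= z <= N)%Z -> In z zr).
  { intros z Hz. unfold zr. apply in_map_iff. exists (Z.to_nat (z + N)). split.
    - rewrite Z2Nat.id by lia. lia.
    - apply in_seq. lia. }
  exists (list_prod zr zr). intros [a b] [Ha Hb]. apply in_prod; auto.
Qed.

Lemma list_bound (l : list site) :
  exists B, (0 <= B)%Z /\ forall x, In x l -> (Z.abs (fst x) <= B /\ Z.abs (snd x) <= B)%Z.
Proof.
  induction l as [|a l [B [HB H]]].
  - exists 0%Z. split; [lia|]. intros x [].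
  - exists (Z.max B (Z.max (Z.abs (fst a)) (Z.abs (snd a)))). split; [lia|].
    intros x [<-|Hx]; [lia|]. specialize (H x Hx). lia.
Qed.

Lemma ip_smul (n a b : Z) u : ip ((n*a)%Z, (n*b)%Z) u = IZR n * ip (a,b) u.
Proof. unfold ip; simpl; rewrite !mult_IZR; ring. Qed.

Lemma line_side_infinite u s (S : siteset) :
  on_circle u -> rational_dir u -> s*s = 1 ->
  (forall x, ip x u = 0 -> 0 <= s * ip x (right_of u) -> S x) -> set_infinite S.
Proof.
  intros Hu [a [b [Hab Hd]]] Hs HS.
  assert (Hdu : ip (a,b) u = 0) by (unfold ip; simpl; exact Hd).
  assert (Hnz : ip (a,b) (right_of u) <> 0).
  { intro H0. unfold on_circle in Hu.
    assert (E : (ip (a,b) u)^2 + (ip (a,b) (right_of u))^2 = (IZR a * IZR a + IZR b * IZR b) * (fst u * fst u + snd u * snd u))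
      by (unfold ip, right_of; simpl; ring).
    rewrite Hdu, H0, Hu in E.
    destruct Hab as [Ha|Ha]; apply not_0_IZR in Ha; nra. }
  assert (Hex : exists a' b', (a' <> 0 \/ b' <> 0)%Z /\ ip (a',b') u = 0 /\ 0 < s * ip (a',b') (right_of u)).
  { destruct (Rlt_dec 0 (s * ip (a,b) (right_of u))) as [h|h].
    - exists a, b. auto.
    - exists (-a)%Z, (-b)%Z. split; [lia|].
      replace (-a)%Z with (-1 * a)%Z by lia. replace (-b)%Z with (-1 * b)%Z by lia.
      rewrite !ip_smul, Hdu. split; [ring|].
      assert (s * ip (a,b) (right_of u) <> 0) by (intro; apply Hnz; nra).
      simpl. lra. }
  clear a b Hab Hd Hdu Hnz.
  destruct Hex as [a [b [Hab [Hdu Hpos]]]].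
  intros [l Hl]. destruct (list_bound l) as [B [HB HBl]].
  assert (HSn : S (((B+1)*a)%Z, ((B+1)*b)%Z)).
  { apply HS; rewrite ip_smul.
    - rewrite Hdu; ring.
    - assert (0 <= IZR (B+1)) by (apply IZR_le; lia). nra. }
  destruct (HBl _ (Hl _ HSn)) as [H1 H2]. simpl in H1, H2.
  rewrite Z.abs_mul in H1, H2. destruct Hab; nia.
Qed.

Lemma side_zero U u L s :
  on_circle u -> rational_dir u -> s*s = 1 ->
  (forall x, L x <-> (ip x u = 0 /\ 0 <= s * ip x (right_of u))) ->
  (exists X, In X U /\ forall y, In y X -> ip y u < 0) -> alpha_side U L u = Fin 0.
Proof.
  intros Hu Hr Hs HL [X [HXU HX]]. unfold alpha_side. apply least_zero.
  exists []. split; [constructor|]. split; [reflexivity|].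
  apply (line_side_infinite u s); auto.
  intros x Hx Hp. split; [|apply HL; auto].
  exists 1%nat. simpl. unfold step. right. exists X. split; auto.
  intros y Hy. left. unfold halfplane. rewrite ip_sadd, Hx. specialize (HX y Hy). lra.
Qed.

Lemma side_inf U u L s :
  on_circle u -> s*s = 1 ->
  (forall x, L x <-> (ip x u = 0 /\ 0 <= s * ip x (right_of u))) ->
  (forall X, In X U -> exists y, In y X /\ (ip y u > 0 \/ (ip y u = 0 /\ 0 <= s * ip y (right_of u)))) ->
  alpha_side U L u = Inf.
Proof.
  intros Hu Hs HL Hst. unfold alpha_side. apply least_inf.
  intros [n [Z [_ [_ Hinf]]]]. apply Hinf.
  destruct (eps_list (concat U) (fun y => s * ip y (right_of u)) (fun y => ip y u)) as [e [He Heps]].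
  set (u' := (fst u + e * (s * snd u), snd u + e * (s * - fst u))).
  assert (Hu' : forall y, ip y u' = ip y u + e * (s * ip y (right_of u)))
    by (intros y; unfold ip, u', right_of; simpl; ring).
  destruct (bound_list Z (fun z => ip z u')) as [C HC].
  set (A := fun x => ip x u < 0 \/ ip x u' < C).
  assert (Hcl : forall x, closure U (set_union (halfplane u) (set_of_list Z)) x -> A x).
  { apply closure_incl.
    - intros x [Hx|Hx]; [left; exact Hx| right; apply HC; exact Hx].
    - intros x Hx X HX. destruct (Hst X HX) as [y [Hy Hy']]. exists y. split; auto.
      unfold A in *. apply not_or_and in Hx as [H1 H2].
      assert (Hin : In y (concat U)) by (apply in_concat; eauto).
      assert (G1 : ip y u >= 0) by (destruct Hy' as [h|[h _]]; lra).
      assert (G2 : ip y u' >= 0).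
      { rewrite Hu'. destruct Hy' as [Hp|[H0 Hs0]].
        - specialize (Heps y Hin Hp). simpl in Heps.
          pose proof (abs_lo (s * ip y (right_of u))). nra.
        - rewrite H0. nra. }
      rewrite !ip_sadd. lra. }
  destruct (archimed (C / e)) as [HN _]. set (N := up (C / e)) in *.
  apply (finite_mono _ _ (box_finite N)).
  intros [x1 x2] [Hc HLx]. apply Hcl in Hc. apply HL in HLx as [H0 Hp].
  set (t := s * ip (x1,x2) (right_of u)) in *.
  assert (Ht : e * t < C).
  { destruct Hc as [h|h]; [lra|]. rewrite Hu' in h. unfold t. lra. }
  assert (Ht2 : t < C / e).
  { apply (Rmult_lt_reg_l e); [lra|]. replace (e * (C / e)) with C by (field; lra). lra. }
  assert (Hsq : IZR x1 * IZR x1 + IZR x2 * IZR x2 = t * t).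
  { unfold on_circle in Hu.
    assert (E : (ip (x1,x2) u)^2 + (ip (x1,x2) (right_of u))^2 = (IZR x1 * IZR x1 + IZR x2 * IZR x2) * (fst u * fst u + snd u * snd u))
      by (unfold ip, right_of; simpl; ring).
    rewrite H0, Hu in E. unfold t.
    replace (s * ip (x1, x2) (right_of u) * (s * ip (x1, x2) (right_of u))) with ((s*s) * (ip (x1, x2) (right_of u))^2) by ring.
    rewrite Hs. lra. }
  assert (HNN : t * t < IZR N * IZR N) by nra.
  assert (Z1 : (x1 * x1 < N * N)%Z).
  { apply lt_IZR. rewrite !mult_IZR. pose proof (Rle_0_sqr (IZR x2)). unfold Rsqr in *. lra. }
  assert (Z2 : (x2 * x2 < N * N)%Z).
  { apply lt_IZR. rewrite !mult_IZR. pose proof (Rle_0_sqr (IZR x1)). unfold Rsqr in *. lra. }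
  assert (HN0 : (0 < N)%Z) by (apply lt_IZR; nra).
  simpl. split; nia.
Qed.

Lemma s_cases s : s * s = 1 -> s = 1 \/ s = -1.
Proof. intros H. assert ((s - 1) * (s + 1) = 0) by nra.
  apply Rmult_integral in H0. lra. Qed.

Lemma alpha_inf U u s :
  on_circle u -> s*s = 1 ->
  (forall X, In X U -> exists y, In y X /\ (ip y u > 0 \/ (ip y u = 0 /\ 0 <= s * ip y (right_of u)))) ->
  alpha U u = Inf.
Proof.
  intros Hu Hs Hst. unfold alpha.
  destruct (excluded_middle_informative (rational_dir u)) as [Hr|Hr].
  - unfold alpha_plus, alpha_minus. destruct (s_cases s Hs) as [->| ->].
    + rewrite (side_inf U u (line_plus u) 1); auto.
      intros x; unfold line_plus, line; split; intros [? ?]; split; lra.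
    + rewrite (side_inf U u (line_minus u) (-1)); auto.
      * destruct (alpha_side U (line_plus u) u); reflexivity.
      * intros x; unfold line_minus, line; split; intros [? ?]; split; lra.
  - destruct (excluded_middle_informative (stable U u)) as [h|h]; [reflexivity|].
    exfalso; apply h. intros x; split.
    + apply closure_incl; auto.
      intros z Hz X HX. destruct (Hst X HX) as [y [Hy Hy']]. exists y. split; auto.
      unfold halfplane in *. rewrite ip_sadd. destruct Hy' as [h1|[h1 _]]; lra.
    + intros H. exists 0%nat. exact H.
Qed.

Lemma alpha_zero U u :
  on_circle u -> (exists X, In X U /\ forall y, In y X -> ip y u < 0) -> alpha U u = Fin 0.
Proof.
  intros Hu HX. unfold alpha.
  destruct (excluded_middle_informative (rational_dir u)) as [Hr|Hr].
  - unfold alpha_plus, alpha_minus.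
    rewrite (side_zero U u (line_plus u) 1), (side_zero U u (line_minus u) (-1)); auto; try lra;
    try (intros x; unfold line_minus, line_plus, line; split; intros [? ?]; split; lra).
  - destruct (excluded_middle_informative (stable U u)) as [h|h]; [|reflexivity].
    exfalso. destruct HX as [X [HXU HX]].
    assert (Hc : closure U (halfplane u) (0%Z, 0%Z)).
    { exists 1%nat. simpl. unfold step. right. exists X. split; [exact HXU|].
      intros y Hy. unfold halfplane. rewrite ip_sadd. specialize (HX y Hy).
      unfold ip at 1; simpl; lra. }
    apply h in Hc. unfold halfplane, ip in Hc. simpl in Hc. lra.
Qed.

Lemma key U k p0 q0 sg u :
  p0*p0 + q0*q0 = 1 -> sg*sg = 1 ->
  fst u = sg*q0 -> snd u = -(sg*p0) ->
  (forall t, open_semicircle (p0,q0) t -> ele (alpha U t) (Fin k)) ->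
  ~ (exists v, on_circle v /\ forall t, closed_semicircle v t -> ele (alpha U t) (Fin k)) ->
  ele (Fin (S k)) (alpha U u).
Proof.
  intros Hv Hs Hu1 Hu2 Hopen Hnb.
  destruct (alpha U u) as [m|] eqn:Ha; [|exact I]. simpl.
  destruct (le_lt_dec (S k) m) as [h|h]; [exact h|]. exfalso.
  assert (Huc : on_circle u).
  { unfold on_circle; rewrite Hu1, Hu2.
    replace (sg*q0*(sg*q0) + -(sg*p0)*-(sg*p0)) with ((sg*sg)*(p0*p0+q0*q0)) by ring.
    rewrite Hs, Hv; ring. }
  assert (Hr : forall y, sg * ip y (right_of u) = - ip y (p0,q0)).
  { intros y. unfold ip, right_of; simpl. rewrite Hu1, Hu2.
    transitivity (-(sg*sg) * (IZR (fst y) * p0 + IZR (snd y) * q0)); [ring|].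
    rewrite Hs. ring. }
  destruct (classic (forall X, In X U -> exists y, In y X /\ (ip y u > 0 \/ (ip y u = 0 /\ 0 <= sg * ip y (right_of u))))) as [Hst|Hst].
  { rewrite (alpha_inf U u sg Huc Hs Hst) in Ha. discriminate. }
  apply not_all_ex_not in Hst as [X HX]. apply imply_to_and in HX as [HXU HX].
  assert (HXy : forall y, In y X -> ip y u < 0 \/ (ip y u = 0 /\ ip y (p0,q0) > 0)).
  { intros y Hy. destruct (Rtotal_order (ip y u) 0) as [h1|[h1|h1]].
    - left; auto.
    - right; split; auto. destruct (Rlt_dec 0 (ip y (p0,q0))) as [h2|h2]; [lra|].
      exfalso; apply HX; exists y; split; auto. right. split; auto. rewrite Hr. lra.
    - exfalso; apply HX; exists y; split; auto. }
  destruct (eps_list X (fun y => ip y (p0,q0)) (fun y => - ip y u)) as [r [Hr0 Hreps]].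
  assert (Hsq : 0 < sqrt (1 + r*r)) by (apply sqrt_lt_R0; nra).
  set (c := / sqrt (1 + r*r)).
  assert (Hc0 : 0 < c) by (apply Rinv_0_lt_compat; auto).
  assert (Hc2 : c*c*(1+r*r) = 1).
  { unfold c. rewrite <- Rinv_mult. rewrite sqrt_sqrt by nra. field. nra. }
  apply Hnb. exists (c*p0 + c*r*fst u, c*q0 + c*r*snd u). split.
  - unfold on_circle; simpl. rewrite Hu1, Hu2.
    transitivity (c*c*((p0*p0+q0*q0) + r*r*(sg*sg)*(p0*p0+q0*q0))); [ring|].
    rewrite Hv, Hs. transitivity (c*c*(1+r*r)); [ring|exact Hc2].
  - intros [t1 t2] [Htc Hdot]. unfold on_circle, dot in *; simpl in *.
    rewrite Hu1, Hu2 in Hdot.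
    remember (t1*(sg*q0) + t2*(-(sg*p0))) as a eqn:Ea.
    remember (t1*p0 + t2*q0) as b eqn:Eb.
    assert (Hab : c * (b + r*a) >= 0) by (rewrite Ea, Eb; rewrite <- Rmult_assoc in Hdot; nra).
    assert (Hab' : b + r*a >= 0).
    { destruct (Rlt_dec (b + r*a) 0) as [h3|h3]; [|lra]. nra. }
    assert (Et1 : t1 = sg*q0*a + p0*b).
    { assert (E : sg*q0*a + p0*b - t1 = t1*((sg*sg-1)*q0*q0 + (p0*p0+q0*q0-1)) - t2*p0*q0*(sg*sg-1))
        by (rewrite Ea, Eb; ring).
      rewrite Hs, Hv in E. lra. }
    assert (Et2 : t2 = -(sg*p0)*a + q0*b).
    { assert (E : -(sg*p0)*a + q0*b - t2 = t2*((sg*sg-1)*p0*p0 + (p0*p0+q0*q0-1)) - t1*p0*q0*(sg*sg-1))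
        by (rewrite Ea, Eb; ring).
      rewrite Hs, Hv in E. lra. }
    assert (Enorm : a*a + b*b = 1).
    { assert (E : a*a + b*b = (sg*sg)*(t1*q0 - t2*p0)^2 + (t1*p0+t2*q0)^2) by (rewrite Ea, Eb; ring).
      rewrite Hs in E. rewrite E.
      transitivity ((t1*t1+t2*t2)*(p0*p0+q0*q0)); [ring|]. rewrite Htc, Hv; ring. }
    destruct (Rtotal_order b 0) as [Hb|[Hb|Hb]].
    + rewrite alpha_zero; [simpl; lia|unfold on_circle; simpl; exact Htc|].
      exists X. split; auto. intros y Hy.
      assert (Ha0 : 0 < a) by nra.
      assert (Eip : ip y (t1,t2) = a * ip y u + b * ip y (p0,q0)).
      { unfold ip. rewrite Hu1, Hu2. simpl. rewrite Et1, Et2. ring. }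
      rewrite Eip.
      destruct (HXy y Hy) as [H1|[H1 H2]].
      * specialize (Hreps y Hy). simpl in Hreps.
        assert (Hre : r * Rabs (ip y (p0, q0)) < - ip y u) by (apply Hreps; lra).
        pose proof (abs_lo (ip y (p0,q0))). pose proof (Rabs_pos (ip y (p0,q0))).
        assert (b * ip y (p0,q0) <= (-b) * Rabs (ip y (p0,q0))) by nra.
        assert ((-b) * Rabs (ip y (p0,q0)) <= r * a * Rabs (ip y (p0,q0))) by nra.
        nra.
      * rewrite H1. nra.
    + assert (Ha1 : a = 1).
      { assert (Ha2 : a*a = 1) by (rewrite Hb in Enorm; lra).
        assert (Hag : a >= 0) by (rewrite Hb in Hab'; nra).
        assert (Hf : (a-1)*(a+1) = 0) by nra.
        apply Rmult_integral in Hf; lra. }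
      assert (Heq : (t1, t2) = u).
      { destruct u as [u1 u2]; simpl in Hu1, Hu2. rewrite Et1, Et2, Ha1, Hb, Hu1, Hu2. f_equal; ring. }
      rewrite Heq, Ha. simpl. lia.
    + apply Hopen. split; [unfold on_circle; simpl; exact Htc|]. unfold dot; simpl. lra.
Qed.

Lemma emin_ge n a b : ele (Fin n) a -> ele (Fin n) b -> ele (Fin n) (emin a b).
Proof. destruct a, b; simpl; auto; intros; lia. Qed.

Theorem mainTheorem4 (U : list (list site)) :
  update_family U -> critical U -> unbalanced U ->
  exists u : dir, on_circle u /\
    ele (esucc (alpha_fam U)) (emin (alpha U u) (alpha U (dneg u))).
Proof.
  intros HU Hcrit Hunb.
  destruct (alpha_fam U) as [k|] eqn:Hf.
  2:{ exfalso; apply Hunb. exists (1,0). split; [unfold on_circle; simpl; ring|].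
      intros u _. rewrite Hf. destruct (alpha U u); exact I. }
  assert (Hnb : ~ (exists v, on_circle v /\ forall t, closed_semicircle v t -> ele (alpha U t) (Fin k))).
  { intros H; apply Hunb. unfold balanced. rewrite Hf. exact H. }
  unfold alpha_fam in Hf. apply least_fin in Hf.
  destruct Hf as [[p0 q0] [Hv Hopen]]. unfold on_circle in Hv; simpl in Hv.
  exists (q0, -p0). split.
  - unfold on_circle; simpl. nra.
  - simpl esucc. apply emin_ge.
    + apply (key U k p0 q0 1); auto; simpl; ring.
    + apply (key U k p0 q0 (-1)); auto; simpl; ring.
Qed.
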